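(* Fix $0<\rho<1$. For $t\in(0,1]$ write $c=\sqrt{t}$ and define $$\begin{aligned}T(t)={}&\frac{2(1+\rho^2-\frac{2}{3}\rho^2 c^2)^{\frac{3}{2}}}{3\rho^2c^2}+\frac{7}{6}-\frac{\rho^2}{10}+\frac{2\rho^2c^2}{15} +\Big(\frac{1}{6}-\frac{7(1+\rho^2)}{30\rho^2c^2}\Big)\Big(\sqrt{1+\rho^2-2\rho c}+\sqrt{1+\rho^2+2\rho c}\Big)\\&+\Big(\frac{\rho c}{12}-\frac{10\rho^2+1}{60\rho c}+\frac{(1+\rho^2)^2}{10\rho^3c^3}\Big)\Big(\sqrt{1+\rho^2-2\rho c}-\sqrt{1+\rho^2+2\rho c}\Big).\end{aligned}$$ Then the left derivative of $T$ at $t=1$ exists and satisfies $T'_{-}(1)\ge 0$. *)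

(* Defs.v *)
From Stdlib Require Import Reals.
From Coquelicot Require Import Coquelicot.
Open Scope R_scope.

Definition Tfun (rho t : R) : R :=
  let c := sqrt t in
  2 * Rpower (1 + rho^2 - 2/3 * rho^2 * c^2) (3/2) / (3 * rho^2 * c^2)
  + 7/6 - rho^2 / 10 + 2 * rho^2 * c^2 / 15
  + (1/6 - 7 * (1 + rho^2) / (30 * rho^2 * c^2))
    * (sqrt (1 + rho^2 - 2 * rho * c) + sqrt (1 + rho^2 + 2 * rho * c))
  + (rho * c / 12 - (10 * rho^2 + 1) / (60 * rho * c)
     + (1 + rho^2)^2 / (10 * rho^3 * c^3))
    * (sqrt (1 + rho^2 - 2 * rho * c) - sqrt (1 + rho^2 + 2 * rho * c)).

Definition is_left_derive (f : R -> R) (x l : R) : Prop :=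
  filterlim (fun t => (f t - f x) / (t - x)) (at_left x) (locally l).

(* Main.v *)
Require Import Defs.
From Stdlib Require Import Reals Lra.
From Coquelicot Require Import Coquelicot.
Open Scope R_scope.
Lemma deriv1 rho : 0 < rho -> rho < 1 -> is_derive (Tfun rho) 1
  ((11*rho^4+60*rho^2+40 - 40/3*(4*rho^2+3)*sqrt(1+rho^2/3))/(60*rho^2)).
Proof.
intros h0 h1.
unfold Tfun, Rpower. cbv zeta.
auto_derive.
- rewrite sqrt_1. assert (rho*rho>0) by nra. repeat split; try lra; try nra; apply Rgt_not_eq; ring_simplify; nra.
- rewrite sqrt_1.
  replace (1 + rho * (rho * 1) + - (2 * rho * 1)) with ((1-rho)^2) by ring.
  replace (1 + rho * (rho * 1) + (2 * rho * 1)) with ((1+rho)^2) by ring.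
  rewrite !sqrt_pow2 by lra.
  replace (1 + rho * (rho * 1) + - (2 / 3 * (rho * (rho * 1)) * (1 * (1 * 1))))
    with (1+rho^2/3) by field.
  assert (HW: 0 < 1 + rho^2/3) by nra.
  assert (E: exp (3/2 * ln (1+rho^2/3)) = (1+rho^2/3) * sqrt (1+rho^2/3)).
  { change (Rpower (1+rho^2/3) (3/2) = (1+rho^2/3) * sqrt (1+rho^2/3)).
    replace (3/2) with (1 + /2) by field.
    rewrite Rpower_plus, Rpower_1, Rpower_sqrt; lra. }
  rewrite E.
  field. repeat split; lra.
Qed.

Lemma nonneg rho : 0 < rho -> rho < 1 ->
  0 <= (11*rho^4+60*rho^2+40 - 40/3*(4*rho^2+3)*sqrt(1+rho^2/3))/(60*rho^2).
Proof.
intros h0 h1.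
assert (hx: 0 < rho^2) by nra.
set (x := rho^2) in *.
replace (rho^4) with (x^2) by (unfold x; ring).
assert (HW: 0 <= 1 + x/3) by nra.
pose proof (sqrt_sqrt _ HW) as Hq. pose proof (sqrt_pos (1+x/3)) as Hq0.
set (q := sqrt (1+x/3)) in *.
set (a := 3*(11*x^2+60*x+40)). set (b := 40*(4*x+3)*q).
assert (ha: 0 < a) by (unfold a; nra).
assert (hb: 0 <= b) by (unfold b; nra).
assert (hab: b^2 <= a^2).
{ unfold a, b. replace ((40*(4*x+3)*q)^2) with (1600*(4*x+3)^2*(q*q)) by ring.
  rewrite Hq. nra. }
assert (b <= a) by nra.
apply Rmult_le_pos; [|apply Rlt_le, Rinv_0_lt_compat; lra].
unfold a, b in *. lra.
Qed.

Theorem lemma7 (rho : R) (hrho0 : 0 < rho) (hrho1 : rho < 1) :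
  exists l : R, is_left_derive (Tfun rho) 1 l /\ 0 <= l.
Proof.
exists ((11*rho^4+60*rho^2+40 - 40/3*(4*rho^2+3)*sqrt(1+rho^2/3))/(60*rho^2)); split; [| apply nonneg; assumption].
pose proof (deriv1 rho hrho0 hrho1) as D.
apply is_derive_Reals in D.
set (L := (11*rho^4+60*rho^2+40 - 40/3*(4*rho^2+3)*sqrt(1+rho^2/3))/(60*rho^2)) in *.
unfold is_left_derive.
apply filterlim_locally. intros eps.
destruct (D eps (cond_pos eps)) as [d Hd].
exists d. intros t Ht Htl. change R in t.
assert (Hh: t - 1 <> 0) by (simpl in *; lra).
assert (Ht': Rabs (t-1) < d) by exact Ht.
specialize (Hd (t-1) Hh Ht').
replace (1 + (t-1)) with t in Hd by (simpl; ring).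
exact Hd.
Qed.
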